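(* Let $a\in\mathbb{R}$, $\sigma>0$, $\gamma>0$, $\lambda>0$, $T\ge1$, channel transition probabilities $p_{cc'}$, and let $Q_t$ be defined on $\mathbb{R}\times\{0,1\}\times\{0,1\}$ by the value iteration in the context. Then there exists an optimal scheduling policy $\phi^\star$ for the original risk-sensitive MDP of threshold type: for each $t\in\{1,\ldots,T\}$ and $c\in\{0,1\}$ there is a threshold $\Delta^\star_t(c)\in[0,\infty]$ such that $\phi^\star_t(\Delta,c)$ minimizes $Q_t(\Delta,c;\cdot)$ for all $\Delta\in\mathbb{R}$, $\phi^\star_t(\Delta,c)=1$ whenever $|\Delta|>\Delta^\star_t(c)$, and $\phi^\star_t(\Delta,c)=0$ whenever $|\Delta|<\Delta^\star_t(c)$.
   Context: Model: $x(t+1)=ax(t)+w(t)$ with $w(t)$ i.i.d. $\mathcal{N}(0,\sigma^2)$; Gilbert–Elliott channel state $c(t)\in\{0,1\}$ a Markov chain with $p_{01},p_{10}\in[0,1]$, $p_{00}=1-p_{01}$, $p_{11}=1-p_{10}$; error $\Delta(t)=x(t)-a\hat x(t-1)$; cost $d(\Delta,c,u)=\lambda u+(1-uc)\Delta^2$; objective $\min\mathbb{E}\exp(\gamma\sum_{t=0}^T d(\Delta(t),c(t),u(t)))$. With $\psi(v)=e^{-v^2/(2\sigma^2)}$, value iteration: $V_0\equiv1$, $Q_{t+1}(\Delta,c;0)=e^{\gamma\Delta^2}\sum_{c_+\in\{0,1\}}p_{cc_+}\int_{\mathbb{R}}\psi(\Delta_+-a\Delta)V_t(\Delta_+,c_+)d\Delta_+$,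 $Q_{t+1}(\Delta,c;1)=(1-c)e^{\gamma(\lambda+\Delta^2)}\sum_{c_+}p_{cc_+}\int_{\mathbb{R}}\psi(\Delta_+-a\Delta)V_t(\Delta_+,c_+)d\Delta_++c\,e^{\gamma\lambda}\sum_{c_+}p_{cc_+}\int_{\mathbb{R}}\psi(\Delta_+)V_t(\Delta_+,c_+)d\Delta_+$, $V_{t+1}=\min_{u\in\{0,1\}}Q_{t+1}(\cdot,\cdot;u)$. A deterministic Markov policy choosing at stage $t$ a minimizer of $Q_t(\Delta,c;\cdot)$ is optimal. A policy is of threshold type if it transmits ($u=1$) only when $|\Delta|$ exceeds a threshold depending on $t$ and the channel state. *)

(* Defs.v *)
(* values of the value iteration live in \bar R,
   since the Gaussian integrals of exponentials of squares may be +oo. *)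
From HB Require Import structures.
From mathcomp Require Import all_boot all_order all_algebra.
From mathcomp Require Import all_classical all_reals all_analysis.
Set Implicit Arguments. Unset Strict Implicit. Unset Printing Implicit Defensive.
Import Order.TTheory GRing.Theory Num.Theory.
Import numFieldNormedType.Exports.
Local Open Scope classical_set_scope.
Local Open Scope ring_scope.

Section Defs.
Variable R : realType.

(* channel state c : bool, false = 0 (bad), true = 1 (good) *)
Definition chanP (p01 p10 : R) (c c' : bool) : R :=
  match c, c' with
  | false, false => 1 - p01
  | false, true  => p01
  | true,  false => p10
  | true,  true  => 1 - p10
  end.

Definition psi (sigma v : R) : R := expR (- (v ^+ 2) / (2 * sigma ^+ 2)).

Definition expect (sigma p01 p10 : R) (V : R -> bool -> \bar R) (c : bool) (m : R)
  : \bar R :=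
  ((chanP p01 p10 c false)%:E *
     \int[lebesgue_measure]_(x in [set: R]) ((psi sigma (x - m))%:E * V x false)
   + (chanP p01 p10 c true)%:E *
     \int[lebesgue_measure]_(x in [set: R]) ((psi sigma (x - m))%:E * V x true))%E.

(* Q_{t+1}(Delta, c; u) computed from V_t; u : bool, false = 0, true = 1 *)
Definition Qstep (a sigma gamma lambda p01 p10 : R) (V : R -> bool -> \bar R)
  (D : R) (c : bool) (u : bool) : \bar R :=
  if u then
    (if c then ((expR (gamma * lambda))%:E * expect sigma p01 p10 V c 0)%E
     else ((expR (gamma * (lambda + D ^+ 2)))%:E
              * expect sigma p01 p10 V c (a * D))%E)
  else ((expR (gamma * D ^+ 2))%:E * expect sigma p01 p10 V c (a * D))%E.

Fixpoint Vfun (a sigma gamma lambda p01 p10 : R) (t : nat) : R -> bool -> \bar R :=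
  match t with
  | 0 => fun _ _ => 1%E
  | t'.+1 => fun D c =>
      Order.min (Qstep a sigma gamma lambda p01 p10 (Vfun a sigma gamma lambda p01 p10 t') D c false)
                (Qstep a sigma gamma lambda p01 p10 (Vfun a sigma gamma lambda p01 p10 t') D c true)
  end.

(* Q_t for t >= 1 *)
Definition Qfun (a sigma gamma lambda p01 p10 : R) (t : nat) (D : R) (c u : bool)
  : \bar R :=
  Qstep a sigma gamma lambda p01 p10 (Vfun a sigma gamma lambda p01 p10 t.-1) D c u.

End Defs.

(* Main.v *)
Require Import Defs.
From HB Require Import structures.
From mathcomp Require Import all_boot all_order all_algebra.
From mathcomp Require Import all_classical all_reals all_analysis.
From mathcomp Require Import measurable_realfun.
From mathcomp Require Import ring lra.
Import Order.TTheory GRing.Theory Num.Theory.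
Import numFieldNormedType.Exports.
Local Open Scope classical_set_scope.
Local Open Scope ring_scope.
Section S.
Variable R : realType.
Local Notation mu := (@lebesgue_measure R).

Definition Mon (f : R -> \bar R) := forall x y : R, `|x| <= `|y| -> (f x <= f y)%E.
Definition NN (f : R -> \bar R) := forall x : R, (0 <= f x)%E.

Lemma Mon_even f : Mon f -> forall x, f (- x) = f x.
Proof. by move=> Mf x; apply/eqP; rewrite eq_le !Mf// normrN. Qed.

Lemma Mon_abs f : Mon f -> forall x, f `|x| = f x.
Proof. by move=> Mf x; apply/eqP; rewrite eq_le !Mf// normr_id. Qed.

Lemma nd_meas (h : R -> \bar R) : {homo h : x y / x <= y >-> (x <= y)%E} ->
  measurable_fun [set: R] h.
Proof.
move=> hnd; apply: (measurability _ (ErealGenCInfty.measurableE R)) => //.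
move=> /= _ [_ [r ->] <-]; apply: measurableI => //.
apply: is_interval_measurable => u v /=; rewrite !in_itv/= !andbT => hu hv w /andP[uw wv].
by rewrite in_itv /= andbT (le_trans hu)// hnd.
Qed.

Lemma Mon_meas f : Mon f -> measurable_fun [set: R] f.
Proof.
move=> Mf.
have -> : f = (fun y => f (Num.max y 0)) \o (fun x => `|x|).
  apply/funext => x /=; rewrite max_l ?normr_ge0 //.
  by rewrite (Mon_abs _ Mf).
have mn : measurable_fun [set: R] (fun x : R => `|x|) by exact: normr_measurable.
have : measurable_fun [set: R] (fun y => f (Num.max y 0)).
  apply: nd_meas => u v uv.
  have hu : 0 <= Num.max u 0 by rewrite le_max lexx orbT.
  have hv : 0 <= Num.max v 0 by rewrite le_max lexx orbT.
  apply: Mf; rewrite (ger0_norm hu) (ger0_norm hv) ge_max !le_max uv lexx !orbT //.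
move=> h; exact: (measurableT_comp h mn).
Qed.

Lemma psi_gt0 (s v : R) : 0 < psi s v.
Proof. exact: expR_gt0. Qed.

Lemma psiN (s v : R) : psi s (- v) = psi s v.
Proof. by rewrite /psi sqrrN. Qed.

Lemma psi_le (s u v : R) : v ^+ 2 <= u ^+ 2 -> psi s u <= psi s v.
Proof.
move=> h; rewrite /psi ler_expR !mulNr lerN2 ler_wpM2r // invr_ge0.
by rewrite mulr_ge0 // sqr_ge0.
Qed.

Lemma psi_meas (s m : R) : measurable_fun [set: R] (fun x => psi s (x - m)).
Proof.
rewrite /psi.
have h : measurable_fun [set: R] (fun x : R => - ((x - m) ^+ 2) / (2 * s ^+ 2)).
  apply: measurable_funM => //; apply: measurable_funN.
  by apply: measurable_funX; exact: measurable_funB.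
exact: (measurableT_comp (@measurable_expR R) h).
Qed.

Lemma key_ineq (A B : R) (F G : \bar R) : 0 < B -> B <= A -> (0 <= G)%E -> (G <= F)%E ->
  (B%:E * F + A%:E * G <= A%:E * F + B%:E * G)%E.
Proof.
move=> B0 BA G0 GF.
have A0 : 0 < A by exact: lt_le_trans BA.
case: F GF => [r| |] GF.
- case: G G0 GF => [q| |] //= G0 GF.
  rewrite -!EFinM -!EFinD lee_fin; move: G0 GF; rewrite !lee_fin => G0 GF.
  have : 0 <= (A - B) * (r - q) by apply: mulr_ge0; lra.
  nra.
- rewrite !gt0_muley ?lte_fin //.
  case: G G0 GF => [q| |] //= G0 GF; rewrite ?gt0_muley ?lte_fin //.
- by case: G G0 GF.
Qed.

Lemma mphi0 (s : R) : measurable_fun [set: R] (fun x : R => s - x).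
Proof. apply: measurable_funB => //. Qed.
Lemma mphi (s : R) : measurable_fun [set: measurableTypeR R] (fun x : measurableTypeR R => (s - x : measurableTypeR R)).
Proof. exact: mphi0. Qed.

Lemma push_refl (s : R) A : measurable A ->
  pushforward mu (fun x : measurableTypeR R => (s - x : measurableTypeR R)) A = mu A.
Proof.
move=> mA.
have := @lebesgue_measure_unique R (measure_function_pushforward__canonical__measure_function_Measure mu (mphi s)) _ A mA.
move=> /= ->; first by [].
move=> _ [[a b]] _ <-.
rewrite /pushforward /=.
have -> : (fun x : R => s - x) @^-1` `]a, b]%classic = `[s - b, s - a[%classic.
  apply/seteqP; split => x /=; rewrite !in_itv/= => /andP[h1 h2]; apply/andP; split;
   lra.
rewrite !lebesgue_measure_itv/= !lte_fin.
have -> : (s - b < s - a) = (a < b) by apply/idP/idP => ?; lra.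
case: ifP => // _; congr (_%:E); lra.
Qed.

Lemma refl_int (s : R) (D : set R) (F : R -> \bar R) : measurable D ->
  measurable_fun D F -> (forall x, D x -> (0 <= F x)%E) ->
  (\int[mu]_(x in D) F x = \int[mu]_(x in (fun x => s - x)%R @^-1` D) F (s - x)%R)%E.
Proof.
move=> mD mF F0.
have := @ge0_integral_pushforward _ _ _ _ R _ (mphi s) mu D F mD mF.
rewrite /= => <-; last by move=> y /set_mem; exact: F0.
apply: eq_measure_integral; first exact: mphi.
move=> H A mA _; have := @push_refl s A mA; exact: esym.
Qed.

Definition Gc (s : R) (f : R -> \bar R) (m : R) :=
  (\int[mu]_(x in [set: R]) ((psi s (x - m))%:E * f x))%E.

Lemma Fm_meas (s m : R) f : Mon f ->
  measurable_fun [set: R] (fun x => (psi s (x - m))%:E * f x)%E.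
Proof.
move=> Mf; apply: emeasurable_funM; last exact: Mon_meas.
by apply/measurable_EFinP; exact: psi_meas.
Qed.

Lemma Fm_ge0 (s m : R) f : NN f -> forall x, (0 <= (psi s (x - m))%:E * f x)%E.
Proof. by move=> Nf x; rewrite mule_ge0 // lee_fin ltW // psi_gt0. Qed.

Lemma G_even (s m : R) f : NN f -> Mon f -> Gc s f (- m) = Gc s f m.
Proof.
move=> Nf Mf; rewrite /Gc.
rewrite (refl_int 0 _ _ measurableT (Fm_meas s (- m) _ Mf) (fun x _ => Fm_ge0 s (- m) _ Nf x)).
rewrite preimage_setT; apply: eq_integral => x _.
by rewrite sub0r (Mon_even _ Mf) -psiN opprB opprK addrC.
Qed.


Lemma split_int (s : R) (H : R -> \bar R) : measurable_fun [set: R] H ->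
  (forall x, (0 <= H x)%E) ->
  (\int[mu]_(x in [set: R]) H x =
   \int[mu]_(x in `](s / 2)%R, +oo[) H x + \int[mu]_(x in `](s / 2)%R, +oo[) H (s - x)%R)%E.
Proof.
move=> mH H0.
have -> : [set: R] = `]s / 2, +oo[ `|` `]-oo, s / 2].
  apply/seteqP; split => x //= _.
  rewrite !in_itv /= andbT; case: (ltP (s / 2) x) => h; [by left | by right].
have mHU : measurable_fun (`](s / 2)%R, +oo[ `|` `]-oo, (s / 2)%R]) H.
  exact: (measurable_funS measurableT (@subsetT _ _) mH).
have disj : [disjoint `](s / 2)%R, +oo[ & `]-oo, (s / 2)%R]].
  apply/disj_setPS => x [] /=; rewrite !in_itv /= andbT => h1 h2; lra.
rewrite (@ge0_integral_setU _ _ _ mu _ _ (measurable_itv _) (measurable_itv _) H mHU (fun x _ => H0 x) disj).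
congr (_ + _)%E.
rewrite (refl_int s _ _ (measurable_itv _) _ (fun x _ => H0 (s - x)%R)); last first.
  apply: (measurable_funS measurableT (@subsetT _ _)).
  exact: (measurableT_comp mH (mphi0 s)).
have -> : (fun x => s - x) @^-1` `](s / 2)%R, +oo[ = `]-oo, (s / 2)%R] `\ (s / 2)%R.
  apply/seteqP; split => x /=; rewrite !in_itv /=.
  + move=> h; split; first lra.
    move=> hx; move: h; rewrite hx; lra.
  + move=> [h1 h2]; have : x != s / 2 by apply/eqP.
    rewrite neq_lt => /orP[]; lra.
have mD : measurable (`]-oo, (s / 2)%R] `\ (s / 2)%R).
  by apply: measurableD => //; exact: measurable_set1.
rewrite -(integral_setD1 mD (measurable_funS measurableT (@subsetT _ _) mH)).
apply: eq_integral => x _; congr H; lra.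
Qed.



Lemma G_mon_pos (s : R) f (m1 m2 : R) : NN f -> Mon f -> 0 <= m1 -> m1 <= m2 ->
  (Gc s f m1 <= Gc s f m2)%E.
Proof.
move=> Nf Mf h1 h12.
set S := m1 + m2.
have mF m : measurable_fun [set: R] (fun x => (psi s (x - m)%R)%:E * f x)%E by exact: Fm_meas.
have F0 m := Fm_ge0 s m _ Nf.
have mFS m : measurable_fun [set: R] (fun x => (psi s (S - x - m)%R)%:E * f (S - x)%R)%E.
  exact: (measurableT_comp (mF m) (mphi0 S)).
have hU : measurable (`](S / 2)%R, +oo[ : set R) by exact: measurable_itv.
have addU m : (\int[mu]_(x in `](S / 2)%R, +oo[) ((psi s (x - m)%R)%:E * f x) +
   \int[mu]_(x in `](S / 2)%R, +oo[) ((psi s (S - x - m)%R)%:E * f (S - x)%R) =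
   \int[mu]_(x in `](S / 2)%R, +oo[) ((psi s (x - m)%R)%:E * f x + (psi s (S - x - m)%R)%:E * f (S - x)%R))%E.
  rewrite ge0_integralD //.
  - exact: (measurable_funS measurableT (@subsetT _ _) (mF m)).
  - exact: (measurable_funS measurableT (@subsetT _ _) (mFS m)).
rewrite /Gc (split_int S _ (mF m1) (F0 m1)) (split_int S _ (mF m2) (F0 m2)) !addU.
have mSum m : measurable_fun [set: R] (fun x => (psi s (x - m)%R)%:E * f x + (psi s (S - x - m)%R)%:E * f (S - x)%R)%E.
  exact: emeasurable_funD (mF m) (mFS m).
apply: ge0_le_integral => //.
- by move=> x _; apply: adde_ge0; exact: F0.
- exact: (measurable_funS measurableT (@subsetT _ _) (mSum m1)).
- exact: (measurable_funS measurableT (@subsetT _ _) (mSum m2)).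
move=> x /=; rewrite in_itv /= andbT => hx.
have -> : S - x - m1 = - (x - m2) by rewrite /S; ring.
have -> : S - x - m2 = - (x - m1) by rewrite /S; ring.
rewrite !psiN.
apply: key_ineq; first exact: psi_gt0.
- apply: psi_le; rewrite /S in hx.
  have : 0 <= (m2 - m1) * (2 * x - m1 - m2) by apply: mulr_ge0; lra.
  nra.
- exact: Nf.
- apply: Mf; rewrite /S in hx; rewrite (@ger0_norm _ x); last lra.
  rewrite /S ler_norml; apply/andP; split; clear -hx h1 h12; lra.
Qed.

Lemma G_abs (s : R) f m : NN f -> Mon f -> Gc s f `|m| = Gc s f m.
Proof.
move=> Nf Mf; have [m0|m0] := leP 0 m; first by rewrite ger0_norm.
rewrite (ltr0_norm m0); exact: (G_even s m f Nf Mf).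
Qed.

Lemma G_Mon (s : R) f : NN f -> Mon f -> Mon (Gc s f).
Proof.
move=> Nf Mf x y hxy; rewrite -(G_abs s _ x Nf Mf) -(G_abs s _ y Nf Mf).
exact: G_mon_pos.
Qed.

Lemma G_NN (s : R) f : NN f -> NN (Gc s f).
Proof. by move=> Nf m; apply: integral_ge0 => x _; exact: Fm_ge0. Qed.

Lemma chanP_ge0 (p01 p10 : R) c c' : 0 <= p01 <= 1 -> 0 <= p10 <= 1 ->
  0 <= chanP p01 p10 c c'.
Proof.
move=> /andP[h1 h2] /andP[h3 h4].
by case: c; case: c' => /=; rewrite ?subr_ge0.
Qed.

Lemma expect_MonNN (s p01 p10 : R) (V : R -> bool -> \bar R) c :
  0 <= p01 <= 1 -> 0 <= p10 <= 1 ->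
  (forall b, NN (fun x => V x b)) -> (forall b, Mon (fun x => V x b)) ->
  Mon (expect s p01 p10 V c) /\ NN (expect s p01 p10 V c).
Proof.
move=> hp hq NV MV; split.
- move=> x y hxy; rewrite /expect; apply: leeD.
  + apply: lee_wpmul2l; first by rewrite lee_fin chanP_ge0.
    exact: (G_Mon s _ (NV false) (MV false) _ _ hxy).
  + apply: lee_wpmul2l; first by rewrite lee_fin chanP_ge0.
    exact: (G_Mon s _ (NV true) (MV true) _ _ hxy).
- move=> m; rewrite /expect; apply: adde_ge0; apply: mule_ge0;
    rewrite ?lee_fin ?chanP_ge0 //; exact: G_NN.
Qed.

Lemma sq_le (x y : R) : `|x| <= `|y| -> x ^+ 2 <= y ^+ 2.
Proof.
move=> h; rewrite -(real_normK (num_real x)) -(real_normK (num_real y)) !expr2.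
by apply: ler_pM.
Qed.

Lemma min_Mon (f g : R -> \bar R) : Mon f -> Mon g ->
  Mon (fun x => Order.min (f x) (g x)).
Proof.
move=> Mf Mg x y hxy; rewrite le_min !ge_min.
by rewrite Mf // Mg // orbT.
Qed.

Lemma min_NN (f g : R -> \bar R) : NN f -> NN g -> NN (fun x => Order.min (f x) (g x)).
Proof. by move=> Nf Ng x; rewrite le_min Nf Ng. Qed.

Lemma expq_Mon (g l : R) (E : R -> \bar R) (a : R) : 0 <= g -> Mon E -> NN E ->
  Mon (fun D => (expR (g * (l + D ^+ 2)))%:E * E (a * D)%R)%E.
Proof.
move=> g0 ME NE x y hxy; apply: lee_pmul.
- by rewrite lee_fin expR_ge0.
- exact: NE.
- rewrite lee_fin ler_expR; apply: ler_wpM2l => //; rewrite lerD2l; exact: sq_le.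
- by apply: ME; rewrite !normrM; apply: ler_wpM2l.
Qed.

Lemma expq_NN (g l : R) (E : R -> \bar R) (a : R) : NN E ->
  NN (fun D => (expR (g * (l + D ^+ 2)))%:E * E (a * D)%R)%E.
Proof. by move=> NE x; rewrite mule_ge0 // lee_fin expR_ge0. Qed.

Lemma Q0_MonNN (a s g l p q : R) V c : 0 <= g -> 0 <= p <= 1 -> 0 <= q <= 1 ->
  (forall b, NN (fun x => V x b)) -> (forall b, Mon (fun x => V x b)) ->
  (forall u, Mon (fun D => Qstep a s g l p q V D c u) /\
             NN (fun D => Qstep a s g l p q V D c u)).
Proof.
move=> g0 hp hq NV MV.
have [ME NE] := expect_MonNN s p q V c hp hq NV MV.
have e0 D : expR (g * D ^+ 2) = expR (g * (0 + D ^+ 2)) by rewrite add0r.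
case; rewrite /Qstep; last first.
- split.
  + move=> x y hxy; rewrite !e0; exact: (expq_Mon g 0 _ a g0 ME NE).
  + by move=> x; rewrite e0; exact: (expq_NN g 0 _ a NE).
case: c ME NE => ME NE.
- split; first by move=> x y _.
  by move=> x; rewrite mule_ge0 // lee_fin expR_ge0.
- split; first exact: (expq_Mon g l _ a g0 ME NE).
  exact: (expq_NN g l _ a NE).
Qed.

Lemma Vfun_MonNN (a s g l p q : R) t : 0 <= g -> 0 <= p <= 1 -> 0 <= q <= 1 ->
  (forall b, NN (fun x => Vfun a s g l p q t x b)) /\
  (forall b, Mon (fun x => Vfun a s g l p q t x b)).
Proof.
move=> g0 hp hq; elim: t => [|t [NV MV]] /=.
  by split => b x //= y _.
have H b u := Q0_MonNN a s g l p q _ b g0 hp hq NV MV u.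
split => b.
- by apply: min_NN; [exact: (H b false).2 | exact: (H b true).2].
- by apply: min_Mon; [exact: (H b false).1 | exact: (H b true).1].
Qed.

End S.

Theorem corollary1 (R : realType) (a sigma gamma lambda p01 p10 : R) (T : nat) :
  0 < sigma -> 0 < gamma -> 0 < lambda -> (1 <= T)%N ->
  0 <= p01 <= 1 -> 0 <= p10 <= 1 ->
  exists (phi : nat -> R -> bool -> bool) (thr : nat -> bool -> \bar R),
    forall t : nat, (1 <= t <= T)%N -> forall c : bool,
      (0 <= thr t c)%E /\
      forall D : R,
        (forall u : bool,
            (Qfun a sigma gamma lambda p01 p10 t D c (phi t D c)
             <= Qfun a sigma gamma lambda p01 p10 t D c u)%E) /\
        ((thr t c < (`|D|)%:E)%E -> phi t D c = true) /\
        (((`|D|)%:E < thr t c)%E -> phi t D c = false).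
Proof.
move=> s0 g0 l0 T1 hp hq.
pose Q t D c u := Qfun a sigma gamma lambda p01 p10 t D c u.
exists (fun t D c => c && (Q t D c true < Q t D c false)%E).
exists (fun t c => if c then ereal_sup [set y | y = 0%E \/ exists D,
   (Q t D true false <= Q t D true true)%E /\ y = (`|D|)%:E] else +oo%E).
move=> t _ c.
have [NV MV] := @Vfun_MonNN R a sigma gamma lambda p01 p10 t.-1 (ltW g0) hp hq.
have HQ := @Q0_MonNN R a sigma gamma lambda p01 p10 (Vfun a sigma gamma lambda p01 p10 t.-1) c (ltW g0) hp hq NV MV.
case: c HQ => HQ /=.
- split; first by apply: ereal_sup_ubound; left.
  move=> D; split; [|split].
  + move=> u; case: (ltP (Q t D true true) (Q t D true false)) => h.
    * by case: u => //; exact: ltW.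
    * by case: u.
  + move=> H; apply/negP => /negP; rewrite -leNgt => hle.
    have : ((`|D|)%:E <= ereal_sup [set y | y = 0%E \/ exists D,
      (Q t D true false <= Q t D true true)%E /\ y = (`|D|)%:E])%E.
      by apply: ereal_sup_ubound; right; exists D.
    by rewrite leNgt H.
  + move=> H; have [y Sy hy] := ereal_sup_gt H.
    case: Sy => [y0|[D' [hD' yD']]].
      have h0 : ((`|D|)%:E < 0)%E by rewrite -y0.
      by exfalso; rewrite lte_fin normr_lt0 in h0.
    apply/negbTE; rewrite -leNgt.
    rewrite yD' lte_fin in hy.
    apply: le_trans hD'.
    exact: ((HQ false).1 D D' (ltW hy)).
- split; first exact: leey.
  move=> D; split; [|split] => //.
  + case => //=; rewrite /Q /Qfun /Qstep.
    apply: lee_wpmul2r; first by have [_ NE] := @expect_MonNN R sigma p01 p10 _ false hp hq NV MV; exact: NE.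
    by rewrite lee_fin ler_expR; apply: ler_wpM2l; [exact: ltW | rewrite lerDr; exact: ltW].
Qed.
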